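(* For every integer $r\ge2$, \[K_{A_r}(2\alpha_1+2\alpha_2+\cdots+2\alpha_r)=\frac{(5-\sqrt5)^r+(5+\sqrt5)^r}{5\cdot 2^r}.\]
   Context: $\varepsilon_1,\dots,\varepsilon_{r+1}$ is the standard basis of $\mathbb{R}^{r+1}$, $\alpha_i=\varepsilon_i-\varepsilon_{i+1}$, so $2\alpha_1+\cdots+2\alpha_r=2\varepsilon_1-2\varepsilon_{r+1}$. $\Phi^+_{A_r}=\{\varepsilon_i-\varepsilon_j:1\le i<j\le r+1\}$ and $K_{A_r}(\mu)$ is the number of finite multisets of elements of $\Phi^+_{A_r}$ summing to $\mu$. *)

(* Defs.v *)
From HB Require Import structures.
From mathcomp Require Import all_boot all_order all_algebra.
Set Implicit Arguments. Unset Strict Implicit. Unset Printing Implicit Defensive.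
Import Order.TTheory GRing.Theory Num.Theory.

(* Coordinates of R^{r+1} are indexed by 'I_(r.+1) (0-based: eps_1 .. eps_{r+1}
   become indices 0 .. r).  A positive root eps_i - eps_j (i<j) of A_r is
   encoded by the pair (i,j) with i < j. *)
Definition posroot (r : nat) := {p : 'I_r.+1 * 'I_r.+1 | p.1 < p.2}.

Definition multiset_root (r : nat) := {ffun posroot r -> nat}.

Definition ms_sum (r : nat) (m : multiset_root r) (k : 'I_r.+1) : int :=
  (\sum_(a : posroot r)
     (m a)%:Z * (((k == (val a).1) : nat)%:Z - ((k == (val a).2) : nat)%:Z))%R.

(* Coordinates of 2 alpha_1 + ... + 2 alpha_r = 2 eps_1 - 2 eps_{r+1}. *)
Definition two_rho_coord (r : nat) (k : 'I_r.+1) : int :=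
  (2 * ((k == ord0) : nat)%:Z - 2 * ((k == ord_max) : nat)%:Z)%R.

(* s enumerates, without repetition, exactly the multisets of positive roots
   of A_r summing to mu; hence size s = K_{A_r}(mu). *)
Definition kostant_enum (r : nat) (mu : 'I_r.+1 -> int) (s : seq (multiset_root r)) :=
  uniq s /\ (forall m : multiset_root r, m \in s <-> (forall k, ms_sum m k = mu k)).

(* Main.v *)
Require Import Defs.
From HB Require Import structures.
From mathcomp Require Import all_boot all_order all_algebra.
From mathcomp Require Import zify ring lra.
From Stdlib Require Import FunctionalExtensionality.
Import Order.TTheory GRing.Theory Num.Theory.
Set Implicit Arguments. Unset Strict Implicit. Unset Printing Implicit Defensive.

Definition flow := nat -> nat -> nat.
Definition outf (N : nat) (h : flow) k := \sum_(j < N.+1) h k j.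
Definition inf (N : nat) (h : flow) k := \sum_(i < N.+1) h i k.
Definition supp N (h : flow) := forall i j, ~~ ((i < j) && (j <= N)) -> h i j = 0.
Definition valid N (d : nat -> int) (h : flow) :=
  supp N h /\ forall k, k <= N -> ((outf N h k)%:Z - (inf N h k)%:Z)%R = d k.

Definition gm N (m : multiset_root N) : flow := fun i j =>
  \sum_(a : posroot N | (((val a).1 : nat) == i) && (((val a).2 : nat) == j)) m a.
Definition mk N (h : flow) : multiset_root N := [ffun a : posroot N => h (val a).1 (val a).2].

Lemma no_root N i j : ~~ ((i < j) && (j <= N)) ->
  forall a : posroot N, (((val a).1 : nat) == i) && (((val a).2 : nat) == j) = false.
Proof.
move=> H [[x y] /= hxy]; apply/negbTE/negP => /andP [/eqP e1 /eqP e2].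
move: H; rewrite -e1 -e2 hxy /= -ltnS ltn_ord.
done.
Qed.

Lemma gm_supp N (m : multiset_root N) : supp N (gm m).
Proof. move=> i j H; rewrite /gm big_pred0 //; exact: no_root. Qed.

Lemma gm_mk N h : supp N h -> gm (mk N h) = h.
Proof.
move=> sh; apply: functional_extensionality => i;
  apply: functional_extensionality => j.
case hij: ((i < j) && (j <= N)); last first.
  rewrite sh ?hij // /gm big_pred0 //; by apply: no_root; rewrite hij.
move/andP: hij => [lij ljN].
have liN : i < N.+1 by lia.
have ljN' : j < N.+1 by lia.
have ho : (inord i : 'I_N.+1) < (inord j : 'I_N.+1) by rewrite !inordK.
rewrite /gm (big_pred1 (exist _ (inord i, inord j) ho)).
  by rewrite ffunE /= !inordK.
move=> [[x y] hxy] /=; rewrite /pred1 /= -val_eqE /= xpair_eqE.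
by rewrite -!val_eqE /= !inordK.
Qed.

Lemma mk_gm N (m : multiset_root N) : mk N (gm m) = m.
Proof.
by apply/ffunP => a; rewrite ffunE /gm (big_pred1 a) //.
Qed.

Definition CNTP N (P : flow -> Prop) k := exists s : seq (multiset_root N),
  uniq s /\ (forall m, m \in s <-> P (gm m)) /\ size s = k.

Lemma CNTP_ext N (P Q : flow -> Prop) k : (forall h, supp N h -> (P h <-> Q h)) ->
  CNTP N P k -> CNTP N Q k.
Proof.
move=> e [s [us [ms ss]]]; exists s; split=> //; split=> // m.
by rewrite ms; apply: e; apply: gm_supp.
Qed.

Lemma CNTP_eqk N P k k' : k = k' -> CNTP N P k -> CNTP N P k'.
Proof. by move->. Qed.

Lemma CNTP_union N (P Q : flow -> Prop) a b :
  CNTP N P a -> CNTP N Q b -> (forall h, P h -> Q h -> False) ->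
  CNTP N (fun h => P h \/ Q h) (a + b).
Proof.
move=> [s [us [ms ss]]] [t [ut [mt st]]] dis.
exists (s ++ t); split; last split.
- rewrite cat_uniq us ut andbT /=; apply/hasPn => m /mt Qm; apply/negP => /ms Pm.
  exact: (dis _ Pm Qm).
- move=> m; rewrite mem_cat; split.
    by case/orP => [/ms|/mt]; auto.
  by case=> [/ms|/mt] ->; rewrite ?orbT.
- by rewrite size_cat ss st.
Qed.

Lemma CNTP_one N (P : flow -> Prop) h0 : supp N h0 -> P h0 ->
  (forall h, supp N h -> P h -> h = h0) -> CNTP N P 1.
Proof.
move=> s0 p0 u; exists [:: mk N h0]; split=> //; split=> // m.
rewrite inE; split.
  by move/eqP ->; rewrite gm_mk.
by move=> /(u _ (gm_supp m)) e; rewrite -e mk_gm.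
Qed.

Lemma CNTP_transfer N N' (P Q : flow -> Prop) (F : flow -> flow) k :
  (forall h, P h -> supp N h) -> (forall h, Q h -> supp N' h) ->
  (forall h, P h -> Q (F h)) ->
  (forall h1 h2, P h1 -> P h2 -> F h1 = F h2 -> h1 = h2) ->
  (forall h', Q h' -> exists h, P h /\ F h = h') ->
  CNTP N P k -> CNTP N' Q k.
Proof.
move=> sP sQ PQ inj sur [s [us [ms ss]]].
exists (map (fun m => mk N' (F (gm m))) s); split; last split.
- rewrite map_inj_in_uniq // => m1 m2 /ms p1 /ms p2 e.
  have : gm (mk N' (F (gm m1))) = gm (mk N' (F (gm m2))) by rewrite e.
  rewrite !gm_mk; try by apply: sQ; apply: PQ.
  move=> /(inj _ _ p1 p2) e'.
  by rewrite -(mk_gm m1) e' mk_gm.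
- move=> m'; split.
    move=> /mapP [m /ms pm ->]; rewrite gm_mk; first exact: PQ.
    by apply: sQ; apply: PQ.
  move=> /sur [h [ph eh]]; apply/mapP; exists (mk N h).
    by apply/ms; rewrite gm_mk //; exact: sP.
  by rewrite gm_mk ?eh ?mk_gm //; exact: sP.
- by rewrite size_map.
Qed.

Lemma sum_bump N v (G : nat -> nat) : v <= N.+1 ->
  \sum_(j < N.+2) G j = G v + \sum_(j < N.+1) G (bump v j).
Proof.
move=> hv.
have hv' : v < N.+2 by [].
rewrite (bigD1_ord (inord v : 'I_N.+2)) //= inordK //.
Qed.

Lemma sum_bump0 N v (G : nat -> nat) : v <= N ->
  \sum_(j < N.+1) G j = G v + \sum_(j < N) G (bump v j).
Proof.
case: N => [|N] hv.
  by move: hv; rewrite leqn0 => /eqP ->; rewrite big_ord1 big_ord0 addn0.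
exact: sum_bump.
Qed.

Lemma term_le N (G : nat -> nat) j : j <= N -> G j <= \sum_(i < N.+1) G i.
Proof. by move=> hj; rewrite (sum_bump0 G hj) leq_addr. Qed.

Lemma bumpE v x : bump v x = if v <= x then x.+1 else x.
Proof. by rewrite /bump; case: leqP => _; rewrite ?add1n ?add0n. Qed.

Lemma unbumpE v x : unbump v x = if v < x then x.-1 else x.
Proof. by rewrite /unbump; case: ltnP => _; rewrite ?subn1 ?subn0. Qed.

Definition setf a b c (h : flow) : flow :=
  fun i j => if (i == a) && (j == b) then c else h i j.

Lemma outf_set N a b c h k : b <= N -> h a b = 0 ->
  outf N (setf a b c h) k = outf N h k + (if k == a then c else 0).
Proof.
move=> hb h0; rewrite /outf; case: eqP => [->|ne]; last first.
  by rewrite addn0; apply: eq_bigr => j _; rewrite /setf; case: eqP.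
rewrite !(sum_bump0 _ hb) /setf !eqxx /= h0 add0n addnC; congr (_ + _).
by apply: eq_bigr => j _; rewrite eq_sym (negbTE (neq_bump _ _)).
Qed.

Lemma inf_set N a b c h k : a <= N -> h a b = 0 ->
  inf N (setf a b c h) k = inf N h k + (if k == b then c else 0).
Proof.
move=> ha h0; rewrite /inf; case: eqP => [->|ne]; last first.
  by rewrite addn0; apply: eq_bigr => j _; rewrite /setf; case: eqP => //= _; case: eqP.
rewrite (sum_bump0 (fun i => setf a b c h i b) ha) (sum_bump0 (fun i => h i b) ha).
rewrite /setf !eqxx /= h0 add0n addnC; congr (_ + _).
by apply: eq_bigr => j _; rewrite eq_sym (negbTE (neq_bump _ _)).
Qed.

Lemma valid_supp N d h : valid N d h -> supp N h.
Proof. by case. Qed.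

Lemma shift N (d : nat -> int) a b c (Q : flow -> Prop) k : a < b -> b <= N ->
  CNTP N (fun h => valid N (fun x => (d x - (if x == a then c%:Z else 0)
      + (if x == b then c%:Z else 0))%R) h /\ h a b = 0 /\ Q (setf a b c h)) k ->
  CNTP N (fun h => valid N d h /\ h a b = c /\ Q h) k.
Proof.
move=> hab hb; have ha : a <= N by lia.
apply: (CNTP_transfer (F := setf a b c)).
- by move=> h [[]].
- by move=> h [[]].
- move=> h [[sh vh] [h0 qh]]; split; last by rewrite /setf !eqxx.
  split.
    move=> i j hij; rewrite /setf; case: ifP => [/andP [/eqP e1 /eqP e2]|_].
      by move: hij; rewrite e1 e2 hab hb.
    exact: sh.
  move=> x hx; rewrite outf_set // inf_set //; have := vh x hx.
  case: (x =P a) => ea; case: (x =P b) => eb; try lia.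
- move=> h1 h2 [_ [e1 _]] [_ [e2 _]] E.
  apply: functional_extensionality => i; apply: functional_extensionality => j.
  have := congr1 (fun f => f i j) E; rewrite /setf.
  by case: ifP => [/andP [/eqP -> /eqP ->]|] //; rewrite e1 e2.
- move=> h [[sh vh] [hc qh]].
  have E : setf a b c (setf a b 0 h) = h.
    apply: functional_extensionality => i; apply: functional_extensionality => j.
    by rewrite /setf; case: ifP => [/andP [/eqP -> /eqP ->]|->].
  have h0 : setf a b 0 h a b = 0 by rewrite /setf !eqxx.
  exists (setf a b 0 h); split=> //; split; last by split=> //; rewrite E.
  split.
    by move=> i j hij; rewrite /setf; case: ifP => // _; apply: sh.
  move=> x hx; have := vh x hx.
  have O := outf_set c x hb h0; have I := inf_set c x ha h0.
  rewrite E in O I; rewrite O I.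
  case: (x =P a) => ea; case: (x =P b) => eb; try lia.
Qed.

Definition ins v (h : flow) : flow := fun i j =>
  if (i == v) || (j == v) then 0 else h (unbump v i) (unbump v j).
Definition delf v (h : flow) : flow := fun i j => h (bump v i) (bump v j).
Definition iso v (h : flow) := forall j, h v j = 0 /\ h j v = 0.

Lemma bump_neq v x : (bump v x == v) = false.
Proof. by rewrite eq_sym (negbTE (neq_bump _ _)). Qed.

Lemma ins_delf v h : iso v h -> ins v (delf v h) = h.
Proof.
move=> ih; apply: functional_extensionality => i; apply: functional_extensionality => j.
rewrite /ins /delf; case: (i =P v) => [->|ni]; first by rewrite (proj1 (ih j)).
case: (j =P v) => [->|nj]; first by rewrite (proj2 (ih i)).
rewrite /= !unbumpKcond.
by move/eqP/negbTE: ni => ->; move/eqP/negbTE: nj => ->.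
Qed.

Lemma delf_ins v h : delf v (ins v h) = h.
Proof.
apply: functional_extensionality => i; apply: functional_extensionality => j.
by rewrite /ins /delf !bump_neq /= !bumpK.
Qed.

Lemma del N (d : nat -> int) v (Q : flow -> Prop) k : v <= N -> d v = 0 ->
  CNTP N (fun h => valid N (fun x => d (bump v x)) h /\ Q (ins v h)) k ->
  CNTP N.+1 (fun h => valid N.+1 d h /\ iso v h /\ Q h) k.
Proof.
move=> hv dv.
have hv1 : v <= N.+1 by lia.
apply: (CNTP_transfer (F := ins v)).
- by move=> h [[]].
- by move=> h [[]].
- move=> h [[sh vh] qh]; split; last first.
    by split=> // j; rewrite /ins eqxx ?orbT.
  split.
    move=> i j hij; rewrite /ins; case: (i =P v) => // ni; case: (j =P v) => //= nj.
    apply: sh; move: hij; rewrite !unbumpE.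
    case: (ltnP v i) => l1; case: (ltnP v j) => l2; lia.
  move=> x hx; case: (x =P v) => [->|nx].
    rewrite dv /outf /inf !big1 //= => i _; rewrite /ins eqxx ?orbT //.
  have hx' : unbump v x <= N by rewrite unbumpE; case: (ltnP v x) => l /=; lia.
  have := vh _ hx'; rewrite unbumpKcond.
  move/eqP/negbTE: nx => nx; rewrite nx add0n => <-.
  rewrite /outf /inf (sum_bump (fun j => ins v h x j) hv1) (sum_bump (fun j => ins v h j x) hv1).
  rewrite /ins eqxx nx !orbT /= !add0n.
  congr (_ - _)%R; congr Posz; apply: eq_bigr => j _; by rewrite bump_neq ?orbF bumpK.
- move=> h1 h2 _ _ E; by rewrite -(delf_ins v h1) E delf_ins.
- move=> h [[sh vh] [ih qh]]; exists (delf v h); rewrite ins_delf //; split; last done; split; last done.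
  split.
    move=> i j hij; rewrite /delf; apply: sh; move: hij; rewrite !bumpE.
    case: (leqP v i) => l1; case: (leqP v j) => l2 /=; lia.
  move=> x hx; have hb : bump v x <= N.+1 by rewrite bumpE; case: (leqP v x) => _ /=; lia.
  rewrite -(vh _ hb) /outf /inf (sum_bump (fun j => h (bump v x) j) hv1).
  rewrite (sum_bump (fun j => h j (bump v x)) hv1) (proj1 (ih _)) (proj2 (ih _)) !add0n.
  by [].
Qed.

Lemma valid_dext N (d d' : nat -> int) h : (forall k, k <= N -> d' k = d k) ->
  valid N d h -> valid N d' h.
Proof. by move=> e [sh vh]; split=> // k hk; rewrite e // vh. Qed.

Lemma inf_small N h k : supp N h -> k <= N -> inf N h k = \sum_(i < k) h i k.
Proof.
move=> sh hk; rewrite /inf (big_ord_widen _ (fun i => h i k) (leqW hk)).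
rewrite [RHS]big_mkcond; apply: eq_bigr => i _; case: ifP => // hik.
apply: sh; rewrite hik //.
Qed.

Lemma inf0 N h : supp N h -> inf N h 0 = 0.
Proof. by move=> sh; rewrite inf_small // big_ord0. Qed.

Lemma inf1 N h : supp N h -> 1 <= N -> inf N h 1 = h 0 1.
Proof. by move=> sh hN; rewrite inf_small // big_ord1. Qed.

Lemma inf2 N h : supp N h -> 2 <= N -> inf N h 2 = h 0 2 + h 1 2.
Proof. by move=> sh hN; rewrite inf_small // big_ord_recr big_ord1. Qed.

Lemma out_le N h k j : j <= N -> h k j <= outf N h k.
Proof. by move=> hj; rewrite /outf; apply: (term_le (fun j => h k j)). Qed.

Lemma iso_of N d h v : valid N d h -> v <= N -> d v = 0%R -> inf N h v = 0 -> iso v h.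
Proof.
move=> [sh vh] hv dv iv.
have ov : outf N h v = 0 by have := vh v hv; rewrite dv iv; lia.
move=> j; case: (leqP j N) => hj.
  split.
    by have := @out_le N h v j hj; rewrite ov; lia.
  by have := term_le (fun i => h i v) hj; rewrite -/(inf N h v) iv; lia.
by split; apply: sh; lia.
Qed.

Definition dP N (k : nat) : int := (if k == 0 then 2 else if k == N then -2 else 0)%R.
Definition dR N (k : nat) : int :=
  (if k == 0 then 1 else if k == 1 then 1 else if k == N then -2 else 0)%R.
Definition Pst N h := valid N (dP N) h.
Definition Rst N h := valid N (dR N) h /\ h 0 1 = 0.

Lemma baseP : CNTP 1 (Pst 1) 1.
Proof.
pose h0 : flow := fun i j => if (i == 0) && (j == 1) then 2 else 0.
have s0 : supp 1 h0.
  move=> i j hij; rewrite /h0; case: ifP => [/andP [/eqP e1 /eqP e2]|//].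
  by move: hij; rewrite e1 e2.
apply: (CNTP_one s0).
  split=> // k; rewrite /outf /inf !big_ord_recr !big_ord0 /=.
  by case: k => [|[|k]] //=; rewrite ltnS leqn0.
move=> h sh [_ vh].
have e00 : h 0 0 = 0 by apply: sh.
have := vh 0 (leq0n _); rewrite /outf /inf !big_ord_recr !big_ord0 /= e00 => e.
apply: functional_extensionality => i; apply: functional_extensionality => j.
case hij: ((i < j) && (j <= 1)).
  have [-> ->] : i = 0 /\ j = 1 by lia.
  move: e; rewrite /h0 /dP (sh 1 0) //=; lia.
rewrite sh; last by rewrite hij.
rewrite /h0; case: ifP => [/andP [/eqP e1 /eqP e2]|//].
by move: hij; rewrite e1 e2.
Qed.

Lemma baseR : CNTP 2 (Rst 2) 1.
Proof.
pose h0 : flow := fun i j => if ((i == 0) || (i == 1)) && (j == 2) then 1 else 0.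
have s0 : supp 2 h0.
  move=> i j hij; rewrite /h0; case: ifP => [/andP [/orP [/eqP e1|/eqP e1] /eqP e2]|//].
    by move: hij; rewrite e1 e2.
  by move: hij; rewrite e1 e2.
apply: (CNTP_one s0).
  split=> //; split=> // k; rewrite /outf /inf !big_ord_recr !big_ord0 /=.
  by case: k => [|[|[|k]]] //=.
move=> h sh [[_ vh] h01].
have z := fun i j (H : ~~ ((i < j) && (j <= 2))) => sh i j H.
have := vh 0 (leq0n _); have := vh 1 isT.
rewrite /outf /inf !big_ord_recr !big_ord0 /= /dR /= => e1 e0.
have z00 : h 0 0 = 0 by apply: sh.
have z10 : h 1 0 = 0 by apply: sh.
have z20 : h 2 0 = 0 by apply: sh.
have z11 : h 1 1 = 0 by apply: sh.
have z21 : h 2 1 = 0 by apply: sh.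
apply: functional_extensionality => i; apply: functional_extensionality => j.
case hij: ((i < j) && (j <= 2)); last first.
  rewrite sh; last by rewrite hij.
  rewrite /h0; case: ifP => [/andP [/orP [/eqP e3|/eqP e3] /eqP e2]|//].
    by move: hij; rewrite e3 e2.
  by move: hij; rewrite e3 e2.
have : (i = 0 /\ j = 1) \/ (i = 0 /\ j = 2) \/ (i = 1 /\ j = 2) by lia.
case=> [[-> ->]|[[-> ->]|[-> ->]]]; rewrite /h0 /=; lia.
Qed.

Lemma valid_dext_iff N (d d' : nat -> int) h : (forall k, k <= N -> d k = d' k) ->
  valid N d h <-> valid N d' h.
Proof.
move=> e; split; apply: valid_dext => k hk; by rewrite e.
Qed.

Ltac dem := let k := fresh "k" in let hk := fresh "hk" in
  move=> k hk; rewrite /dP /dR ?bumpE; case: k hk => [|[|[|k]]] hk //=;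
  repeat (case: eqP => ? //=); try lia.

Lemma stepP n a b : CNTP n.+1 (Pst n.+1) a -> CNTP n.+2 (Rst n.+2) b ->
  CNTP n.+2 (Pst n.+2) (a + b + a).
Proof.
move=> HP HR.
have C0 : CNTP n.+2 (fun h => valid n.+2 (dP n.+2) h /\ h 0 1 = 0 /\ True) a.
  apply: (CNTP_ext (P := fun h => valid n.+2 (dP n.+2) h /\ iso 1 h /\ h 0 1 = 0)).
    move=> h sh; split; first by case=> [? [? ?]].
    move=> [vh [e _]]; split=> //; split=> //.
    by apply: (iso_of vh) => //; rewrite inf1.
  apply: (@del n.+1 (dP n.+2) 1 (fun h => h 0 1 = 0)) => //.
  apply: (CNTP_ext _ HP) => h sh; split.
    move=> vh; split; last by rewrite /ins.
    move: vh; apply: valid_dext; dem.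
  move=> [vh _]; move: vh; apply: valid_dext; dem.
have C1 : CNTP n.+2 (fun h => valid n.+2 (dP n.+2) h /\ h 0 1 = 1 /\ True) b.
  apply: (@shift n.+2 (dP n.+2) 0 1 1 (fun _ => True) b isT isT).
  apply: (CNTP_ext _ HR) => h sh; split.
    move=> [vh e]; split=> //; move: vh; apply: valid_dext; dem.
  move=> [vh [e _]]; split=> //; move: vh; apply: valid_dext; dem.
have C2 : CNTP n.+2 (fun h => valid n.+2 (dP n.+2) h /\ h 0 1 = 2 /\ True) a.
  apply: (@shift n.+2 (dP n.+2) 0 1 2 (fun _ => True) a isT isT).
  apply: (CNTP_ext (P := fun h => valid n.+2 (fun x => (dP n.+2 x - (if x == 0 then 2%:Z else 0)
      + (if x == 1 then 2%:Z else 0))%R) h /\ iso 0 h /\ True)).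
    move=> h sh; split.
      by move=> [vh [ih _]]; split=> //; split=> //; case: (ih 1).
    move=> [vh [e _]]; split=> //; split=> //.
    by apply: (iso_of vh) => //; rewrite inf0.
  apply: (@del n.+1 _ 0 (fun _ => True)) => //.
  apply: (CNTP_ext _ HP) => h sh; split.
    move=> vh; split=> //; move: vh; apply: valid_dext; dem.
  move=> [vh _]; move: vh; apply: valid_dext; dem.
have U := CNTP_union (CNTP_union C0 C1 _) C2.
apply: (CNTP_ext _ (U _ _)).
- move=> h sh; split.
    by case=> [[[]|[]]|[]].
  move=> vh; have [sh' vv] := vh.
  have hle : h 0 1 <= 2.
    have := @out_le n.+2 h 0 1 isT; have := vv 0 isT; rewrite inf0 // /dP /=; lia.
  have : h 0 1 = 0 \/ h 0 1 = 1 \/ h 0 1 = 2 by lia.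
  by case=> [e|[e|e]]; [left; left | left; right | right].
- by move=> h [_ [-> _]] [_ [e _]].
- by move=> h [[_ [-> _]]|[_ [-> _]]] [_ [e _]].
Qed.

Lemma stepR n a b : CNTP n.+1 (Pst n.+1) a -> CNTP n.+2 (Rst n.+2) b ->
  CNTP n.+3 (Rst n.+3) (b + b + b + a).
Proof.
move=> HP HR.
pose d1 := fun x => (dR n.+3 x - (if x == 0 then 1%:Z else 0) + (if x == 2 then 1%:Z else 0))%R.
pose d2 := fun x => (dR n.+3 x - (if x == 1 then 1%:Z else 0) + (if x == 2 then 1%:Z else 0))%R.
pose d3 := fun x => (d1 x - (if x == 1 then 1%:Z else 0) + (if x == 2 then 1%:Z else 0))%R.
have C00 : CNTP n.+3 (fun h => valid n.+3 (dR n.+3) h /\ h 0 2 = 0 /\ (h 0 1 = 0 /\ h 1 2 = 0)) b.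
  apply: (CNTP_ext (P := fun h => valid n.+3 (dR n.+3) h /\ iso 2 h /\ h 0 1 = 0)).
    move=> h sh; split.
      by move=> [vh [ih e]]; split=> //; split; [case: (ih 0) | split=> //; case: (ih 1)].
    move=> [vh [e0 [e1 e2]]]; split=> //; split=> //.
    by apply: (iso_of vh) => //; rewrite inf2 // e0 e2.
  apply: (@del n.+2 (dR n.+3) 2 (fun h => h 0 1 = 0)) => //.
  apply: (CNTP_ext _ HR) => h sh; split.
    move=> [vh e]; split; last by rewrite /ins.
    move: vh; apply: valid_dext; dem.
  move=> [vh e]; split; last by move: e; rewrite /ins.
  move: vh; apply: valid_dext; dem.
have C10 : CNTP n.+3 (fun h => valid n.+3 (dR n.+3) h /\ h 0 2 = 1 /\ (h 0 1 = 0 /\ h 1 2 = 0)) b.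
  apply: (@shift n.+3 (dR n.+3) 0 2 1 (fun h => h 0 1 = 0 /\ h 1 2 = 0) b isT isT).
  apply: (CNTP_ext (P := fun h => valid n.+3 d1 h /\ iso 0 h /\ h 1 2 = 0)).
    move=> h sh; split.
      move=> [vh [ih e]]; split=> //; split; first by case: (ih 2).
      by rewrite /setf /=; split=> //; case: (ih 1).
    move=> [vh [e0 [e1 e2]]]; split=> //; split; last by move: e2; rewrite /setf.
    apply: (iso_of vh) => //; last by rewrite inf0.
  apply: (@del n.+2 d1 0 (fun h => h 1 2 = 0)) => //.
  apply: (CNTP_ext _ HR) => h sh; split.
    move=> [vh e]; split; last by rewrite /ins.
    move: vh; apply: valid_dext; rewrite /d1; dem.
  move=> [vh e]; split; last by move: e; rewrite /ins.
  move: vh; apply: valid_dext; rewrite /d1; dem.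
have C01 : CNTP n.+3 (fun h => valid n.+3 (dR n.+3) h /\ h 1 2 = 1 /\ (h 0 1 = 0 /\ h 0 2 = 0)) b.
  apply: (@shift n.+3 (dR n.+3) 1 2 1 (fun h => h 0 1 = 0 /\ h 0 2 = 0) b isT isT).
  apply: (CNTP_ext (P := fun h => valid n.+3 d2 h /\ iso 1 h /\ h 0 2 = 0)).
    move=> h sh; split.
      move=> [vh [ih e]]; split=> //; split; first by case: (ih 2).
      by rewrite /setf /=; split=> //; case: (ih 0).
    move=> [vh [e0 [e1 e2]]]; split=> //; split; last by move: e2; rewrite /setf.
    apply: (iso_of vh) => //; last by rewrite inf1 // -e1 /setf.
  apply: (@del n.+2 d2 1 (fun h => h 0 2 = 0)) => //.
  apply: (CNTP_ext _ HR) => h sh; split.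
    move=> [vh e]; split; last by rewrite /ins.
    move: vh; apply: valid_dext; rewrite /d2; dem.
  move=> [vh e]; split; last by move: e; rewrite /ins.
  move: vh; apply: valid_dext; rewrite /d2; dem.
have C11 : CNTP n.+3 (fun h => valid n.+3 (dR n.+3) h /\ h 0 2 = 1 /\ (h 0 1 = 0 /\ h 1 2 = 1)) a.
  apply: (@shift n.+3 (dR n.+3) 0 2 1 (fun h => h 0 1 = 0 /\ h 1 2 = 1) a isT isT).
  apply: (CNTP_ext (P := fun h => valid n.+3 d1 h /\ h 1 2 = 1 /\ (h 0 2 = 0 /\ h 0 1 = 0))).
    move=> h sh; split.
      by move=> [vh [e [e1 e2]]]; rewrite /setf /=.
    by move=> [vh [e0 [e1 e2]]]; move: e1 e2; rewrite /setf /=.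
  apply: (@shift n.+3 d1 1 2 1 (fun h => h 0 2 = 0 /\ h 0 1 = 0) a isT isT).
  apply: (CNTP_ext (P := fun h => valid n.+3 d3 h /\ iso 0 h /\ h 1 2 = 0)).
    move=> h sh; split.
      move=> [vh [ih e]]; split=> //; split=> //.
      by rewrite /setf /=; split; [case: (ih 2) | case: (ih 1)].
    move=> [vh [e0 [e1 e2]]]; split=> //; split=> //.
    apply: (iso_of vh) => //; last by rewrite inf0.
  apply: (@del n.+2 d3 0 (fun h => h 1 2 = 0)) => //.
  apply: (CNTP_ext (P := fun h => valid n.+2 (fun x => d3 (bump 0 x)) h /\ iso 0 h /\ True)).
    move=> h sh; split.
      by move=> [vh [ih _]]; split=> //; rewrite /ins /=; case: (ih 1).
    move=> [vh e]; split=> //; split=> //.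
    apply: (iso_of vh) => //; last by rewrite inf0.
  apply: (@del n.+1 (fun x => d3 (bump 0 x)) 0 (fun _ => True)) => //.
  apply: (CNTP_ext _ HP) => h sh; split.
    move=> vh; split=> //; move: vh; apply: valid_dext; rewrite /d3 /d1; dem.
  move=> [vh _]; move: vh; apply: valid_dext; rewrite /d3 /d1; dem.
have U := CNTP_union (CNTP_union (CNTP_union C00 C10 _) C01 _) C11.
apply: (CNTP_ext _ (U _ _ _)).
- move=> h sh; split.
    by case=> [[[[? [? [? ?]]]|[? [? [? ?]]]]|[? [? [? ?]]]]|[? [? [? ?]]]]; split.
  move=> [vh e01]; have [sh' vv] := vh.
  have l02 : h 0 2 <= 1.
    have := @out_le n.+3 h 0 2 isT; have := vv 0 isT; rewrite inf0 // /dR /=; lia.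
  have l12 : h 1 2 <= 1.
    have := @out_le n.+3 h 1 2 isT; have := vv 1 isT; rewrite inf1 // e01 /dR /=; lia.
  have : (h 0 2 = 0 /\ h 1 2 = 0) \/ (h 0 2 = 1 /\ h 1 2 = 0) \/
         (h 0 2 = 0 /\ h 1 2 = 1) \/ (h 0 2 = 1 /\ h 1 2 = 1) by lia.
  case=> [[x y]|[[x y]|[[x y]|[x y]]]].
  + by left; left; left.
  + by left; left; right.
  + by left; right.
  + by right.
- by move=> h [_ [x1 [x2 x3]]] [_ [y1 [y2 y3]]]; lia.
- by move=> h [[_ [x1 [x2 x3]]]|[_ [x1 [x2 x3]]]] [_ [y1 [y2 y3]]]; lia.
- by move=> h [[[_ [x1 [x2 x3]]]|[_ [x1 [x2 x3]]]]|[_ [x1 [x2 x3]]]] [_ [y1 [y2 y3]]]; lia.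
Qed.

Lemma out_gm N (m : multiset_root N) (k : 'I_N.+1) :
  outf N (gm m) k = \sum_(a : posroot N) m a * (k == (val a).1).
Proof.
rewrite /outf /gm.
under eq_bigr => j _ do rewrite big_mkcond.
rewrite exchange_big; apply: eq_bigr => a _ /=.
case: (k =P (val a).1) => [ek|nk].
  rewrite muln1 -big_mkcond /= (big_pred1 (val a).2); last first.
    by move=> j; rewrite /pred1 /= ek eqxx /= eq_sym.
  by [].
rewrite muln0 big1 // => j _; case: ifP => // /andP [/eqP e _].
by case: nk; apply: val_inj; rewrite /= e.
Qed.

Lemma in_gm N (m : multiset_root N) (k : 'I_N.+1) :
  inf N (gm m) k = \sum_(a : posroot N) m a * (k == (val a).2).
Proof.
rewrite /inf /gm.
under eq_bigr => j _ do rewrite big_mkcond.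
rewrite exchange_big; apply: eq_bigr => a _ /=.
case: (k =P (val a).2) => [ek|nk].
  rewrite muln1 -big_mkcond /= (big_pred1 (val a).1); last first.
    by move=> j; rewrite /pred1 /= ek eqxx andbT eq_sym.
  by [].
rewrite muln0 big1 // => j _; case: ifP => // /andP [_ /eqP e].
by case: nk; apply: val_inj; rewrite /= e.
Qed.

Lemma ms_sum_eq N (m : multiset_root N) (k : 'I_N.+1) :
  ms_sum m k = ((outf N (gm m) k)%:Z - (inf N (gm m) k)%:Z)%R.
Proof.
rewrite out_gm in_gm /ms_sum.
rewrite !(big_morph Posz PoszD (erefl (Posz 0))) -sumrB.
by apply: eq_bigr => a _; rewrite mulrBr !PoszM.
Qed.

Fixpoint pq n : nat * nat :=
  if n is n'.+1 then ((pq n').1 + (pq n').2 + (pq n').1,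
                      (pq n').2 + (pq n').2 + (pq n').2 + (pq n').1)
  else (1, 1).

Lemma countAll n : CNTP n.+1 (Pst n.+1) (pq n).1 /\ CNTP n.+2 (Rst n.+2) (pq n).2.
Proof.
elim: n => [|n [IP IR]]; first by split; [exact: baseP | exact: baseR].
by split; [exact: stepP | exact: stepR].
Qed.

Section Closed.
Local Open Scope ring_scope.
Variable R : rcfType.

Definition X (n : nat) : R :=
  ((5 - Num.sqrt (5 : R)) ^+ n + (5 + Num.sqrt (5 : R)) ^+ n) / (5 * 2 ^+ n).

Lemma s5 : Num.sqrt (5 : R) ^+ 2 = 5.
Proof. by rewrite sqr_sqrtr // ler0n. Qed.

Lemma Xrec n : X n.+2 = 5 * X n.+1 - 5 * X n.
Proof.
rewrite /X.
set s := Num.sqrt (5 : R).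
have hs : s * s = 5 by rewrite -expr2 s5.
have hu : (5 - s) * (5 - s) = 10 * (5 - s) - 20.
  rewrite mulrBl !mulrBr hs; ring.
have hv : (5 + s) * (5 + s) = 10 * (5 + s) - 20.
  rewrite mulrDl !mulrDr hs; ring.
have T0 : (2 : R) ^+ n != 0 by rewrite expf_neq0 // pnatr_eq0.
rewrite !exprS !mulrA hu hv.
set U := (5 - s) ^+ n; set V := (5 + s) ^+ n; set T := (2 : R) ^+ n.
field.
by rewrite T0 /= ?pnatr_eq0.
Qed.

Lemma pqX n : ((pq n).1)%:R = X n.+1 /\ ((pq n).2)%:R = X n.+2 - 2 * X n.+1.
Proof.
elim: n => [|n [IP IQ]].
  have hs : Num.sqrt (5 : R) * Num.sqrt 5 = 5 by rewrite -expr2 s5.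
  set s := Num.sqrt (5 : R).
  have E : (5 - s) * (5 - s) + (5 + s) * (5 + s) = 60.
    transitivity (50 + 2 * (s * s)); first ring.
    rewrite hs; ring.
  by rewrite /X /= -/s !expr1 !expr2 E; split; field.
have -> : pq n.+1 = ((pq n).1 + (pq n).2 + (pq n).1,
                      (pq n).2 + (pq n).2 + (pq n).2 + (pq n).1) by [].
rewrite /= !natrD IP IQ !Xrec; split; ring.
Qed.
End Closed.

Lemma dP_two r (k : 'I_r.+1) : (0 < r)%N -> two_rho_coord k = dP r k.
Proof.
move=> hr; rewrite /two_rho_coord /dP.
have -> : (k == ord0) = ((k : nat) == 0%N) by [].
have -> : (k == ord_max) = ((k : nat) == r) by [].
case: eqP => [->|nk] /=.
  by case: eqP => [e|] //; move: hr; rewrite -e.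
by case: eqP.
Qed.

Unset Implicit Arguments.
Local Open Scope ring_scope.

Theorem mainTheorem9 (R : rcfType) (r : nat) (hr : (2 <= r)%N) :
  exists s : seq (multiset_root r),
    kostant_enum (@two_rho_coord r) s /\
    (size s)%:R =
      ((5 - Num.sqrt (5 : R)) ^+ r + (5 + Num.sqrt (5 : R)) ^+ r)
        / (5 * 2 ^+ r).
Proof.
case: r hr => [|r] // hr.
have [HP _] := countAll r.
case: HP => s [us [ms ss]].
exists s; split.
  split=> // m; rewrite ms; split.
    move=> [sh vh] k; rewrite ms_sum_eq vh; last exact: ltn_ord k.
    by rewrite dP_two.
  move=> H; split; first exact: gm_supp.
  move=> k hk; have := H (Ordinal (hk : (k < r.+2)%N)).
  by rewrite ms_sum_eq dP_two.
by rewrite ss; have [-> _] := pqX R r.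
Qed.
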